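(* Let $n\ge 2$ and let $t$ be a (non-plane, unranked) rooted binary tree with $n$ leaves. Then the number of ranked (non-plane) trees with $n$ leaves that map to $t$ when ranks are forgotten is \[ \frac{(n-1)!}{\prod_{u\in\breve V(t)}\lfloor t(u)\rfloor}\;2^{\gimel(t)-s(t)}, \] where $\breve V(t)$ is the set of internal nodes of $t$, $\lfloor t(u)\rfloor$ is the number of internal nodes of the subtree $t(u)$ rooted at $u$, $\gimel(t)$ is the number of cherry nodes of $t$ (internal nodes both of whose children are leaves), and $s(t)$ is the number of internal nodes $v$ whose two child subtrees are isomorphic.
   Context: All trees are finite, rooted and binary (each internal node has exactly two children). An internal ranking of a tree with $n$ leaves is a bijective labeling of its $n-1$ internal nodes by $\{1,\dots,n-1\}$ such that the root has rank $1$ and each internal node has smaller rank than each of its internal descendants. A ranked tree is a (non-plane) tree together with an internal ranking, two ranked trees being identified if there is a rooted-tree isomorphism between them preserving ranks. Forgetting the ranks maps a ranked tree to a tree (up to rooted isomorphism). *)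

(* Defs.v *)
From mathcomp Require Import all_boot all_order all_algebra.
Set Implicit Arguments. Unset Strict Implicit. Unset Printing Implicit Defensive.

(* Plane binary trees; non-plane trees are their classes under [isob]. *)
Inductive tree := Leaf | Node of tree & tree.

Fixpoint isob (s t : tree) : bool :=
  match s, t with
  | Leaf, Leaf => true
  | Node a b, Node c d => (isob a c && isob b d) || (isob a d && isob b c)
  | _, _ => false
  end.

Fixpoint leaves (t : tree) : nat :=
  match t with Leaf => 1 | Node a b => leaves a + leaves b end.

Fixpoint internals (t : tree) : nat :=
  match t with Leaf => 0 | Node a b => (internals a + internals b).+1 end.

Fixpoint hook_prod (t : tree) : nat :=
  match t with Leaf => 1 | Node a b => internals t * hook_prod a * hook_prod b end.

Definition is_leaf (t : tree) : bool := if t is Leaf then true else false.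

Fixpoint cherries (t : tree) : nat :=
  match t with
  | Leaf => 0
  | Node a b => (is_leaf a && is_leaf b) + cherries a + cherries b
  end.

Fixpoint sym_nodes (t : tree) : nat :=
  match t with
  | Leaf => 0
  | Node a b => isob a b + sym_nodes a + sym_nodes b
  end.

Inductive rtree := RLeaf | RNode of nat & rtree & rtree.

Fixpoint forget (r : rtree) : tree :=
  match r with RLeaf => Leaf | RNode _ a b => Node (forget a) (forget b) end.

Fixpoint rlabels (r : rtree) : seq nat :=
  match r with RLeaf => [::] | RNode k a b => k :: rlabels a ++ rlabels b end.

Fixpoint heap (r : rtree) : bool :=
  match r with
  | RLeaf => true
  | RNode k a b => all (fun j => k < j) (rlabels a ++ rlabels b) && heap a && heap b
  end.

Definition root_rank_one (r : rtree) : bool :=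
  if r is RNode k _ _ then k == 1 else true.

Definition is_ranking (r : rtree) : bool :=
  [&& perm_eq (rlabels r) (iota 1 (size (rlabels r))), root_rank_one r & heap r].

Fixpoint risob (r s : rtree) : bool :=
  match r, s with
  | RLeaf, RLeaf => true
  | RNode k a b, RNode l c d =>
      (k == l) && ((risob a c && risob b d) || (risob a d && risob b c))
  | _, _ => false
  end.

(* Main.v *)
Require Import Defs.
From HB Require Import structures.
From mathcomp Require Import all_boot all_order all_algebra ring.
Set Implicit Arguments. Unset Strict Implicit. Unset Printing Implicit Defensive.


Fixpoint eqr (r s : rtree) : bool :=
  match r, s with
  | RLeaf, RLeaf => true
  | RNode k a b, RNode l c d => (k == l) && eqr a c && eqr b d
  | _, _ => false
  end.
Lemma eqrP : Equality.axiom eqr.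
Proof.
elim=> [|k a IHa b IHb] [|l c d] /=; try by constructor.
case: eqP => [<-|nkl]; last by constructor; case.
case: IHa => [<-|nac]; last by constructor; case.
by case: IHb => [<-|nbd]; constructor; [|case].
Qed.
HB.instance Definition _ := hasDecEq.Build rtree eqrP.

Lemma isob_refl t : isob t t.
Proof. by elim: t => //= a -> b ->. Qed.
Lemma isob_sym s t : isob s t = isob t s.
Proof.
elim: s t => [|a IHa b IHb] [|c d] //=.
by rewrite (IHa c) (IHa d) (IHb c) (IHb d) [isob d a && _]andbC.
Qed.
Lemma isob_trans s t u : isob s t -> isob t u -> isob s u.
Proof.
elim: s t u => [|a IHa b IHb] [|c d] [|e f] //=.
case/orP=> /andP[h1 h2]; case/orP=> /andP[h3 h4].
- by rewrite (IHa _ _ h1 h3) (IHb _ _ h2 h4).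
- by rewrite (IHa _ _ h1 h3) (IHb _ _ h2 h4) orbT.
- by rewrite (IHa _ _ h1 h4) (IHb _ _ h2 h3) orbT.
- by rewrite (IHa _ _ h1 h4) (IHb _ _ h2 h3).
Qed.
Lemma isob_internals s t : isob s t -> internals s = internals t.
Proof.
elim: s t => [|a IHa b IHb] [|c d] //=.
by case/orP=> /andP[/IHa-> /IHb->] //; rewrite addnC.
Qed.

Lemma risob_refl r : risob r r.
Proof. by elim: r => //= k a -> b ->; rewrite eqxx. Qed.
Lemma risob_sym s t : risob s t = risob t s.
Proof.
elim: s t => [|k a IHa b IHb] [|l c d] //=.
by rewrite (IHa c) (IHa d) (IHb c) (IHb d) [risob d a && _]andbC eq_sym.
Qed.
Lemma risob_trans s t u : risob s t -> risob t u -> risob s u.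
Proof.
elim: s t u => [|k a IHa b IHb] [|l c d] [|m e f] //=.
case/andP=> /eqP-> + /andP[/eqP-> +]; rewrite eqxx /=.
case/orP=> /andP[h1 h2]; case/orP=> /andP[h3 h4].
- by rewrite (IHa _ _ h1 h3) (IHb _ _ h2 h4).
- by rewrite (IHa _ _ h1 h3) (IHb _ _ h2 h4) orbT.
- by rewrite (IHa _ _ h1 h4) (IHb _ _ h2 h3) orbT.
- by rewrite (IHa _ _ h1 h4) (IHb _ _ h2 h3).
Qed.
Lemma risob_forget s t : risob s t -> isob (forget s) (forget t).
Proof.
elim: s t => [|k a IHa b IHb] [|l c d] //= /andP[_].
by case/orP=> /andP[/IHa-> /IHb->] //; rewrite orbT.
Qed.
Lemma risob_perm s t : risob s t -> perm_eq (rlabels s) (rlabels t).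
Proof.
elim: s t => [|k a IHa b IHb] [|l c d] //= /andP[/eqP<-].
rewrite perm_cons; case/orP=> /andP[/IHa h1 /IHb h2]; first exact: perm_cat.
by rewrite perm_catC; apply: perm_cat.
Qed.
Lemma size_rlabels r : size (rlabels r) = internals (forget r).
Proof. by elim: r => //= k a IHa b IHb; rewrite size_cat IHa IHb. Qed.
Lemma leaves_internals t : leaves t = (internals t).+1.
Proof. by elim: t => //= a -> b ->; rewrite addSn addnS. Qed.


Fixpoint splits (S : seq nat) (p : nat) : seq (seq nat * seq nat) :=
  match S with
  | [::] => if p is 0 then [:: ([::], [::])] else [::]
  | y :: S' => (if p is p'.+1 then map (fun AB => (y :: AB.1, AB.2)) (splits S' p') else [::])
               ++ map (fun AB => (AB.1, y :: AB.2)) (splits S' p)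
  end.

Definition splits1 (S : seq nat) p :=
  if S is y :: S' then map (fun AB => (y :: AB.1, AB.2)) (splits S' p.-1) else splits S p.

Lemma splits_mem S p AB : AB \in splits S p ->
  [/\ subseq AB.1 S, subseq AB.2 S, perm_eq (AB.1 ++ AB.2) S & size AB.1 = p].
Proof.
elim: S p AB => [|y S IH] p AB /=.
  by case: p => // /[!inE] /eqP->.
rewrite mem_cat; case/orP.
  case: p => // p /mapP[[A B] /IH[h1 h2 h3 h4] ->] /=.
  rewrite eqxx h1 perm_cons h3 h4; split=> //.
  exact: subseq_trans h2 (subseq_cons _ _).
case/mapP=> [[A B] /IH[h1 h2 h3 h4] ->] /=.
rewrite eqxx h2 h4; split=> //.
  exact: subseq_trans h1 (subseq_cons _ _).
by rewrite -[y :: B]/([:: y] ++ B) perm_catCA /= perm_cons.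
Qed.

Lemma splits_filter (P : pred nat) S :
  (filter P S, filter (predC P) S) \in splits S (count P S).
Proof.
elim: S => [|y S IH] /=; first by rewrite inE.
rewrite mem_cat; case: (P y) => /=.
  by rewrite add1n (map_f (fun AB => (y :: AB.1, AB.2)) IH).
by rewrite add0n (map_f (fun AB => (AB.1, y :: AB.2)) IH) orbT.
Qed.

Lemma splits_uniq S p : uniq S -> uniq (splits S p).
Proof.
elim: S p => [|y S IH] p /=; first by case: p.
case/andP=> yS uS; rewrite cat_uniq map_inj_uniq ?IH //; last first.
  by move=> [A B] [C D] /= [-> ->].
apply/andP; split.
  case: p => [|p] //=; rewrite map_inj_uniq ?IH //.
  by move=> [A B] [C D] /= [-> ->].
rewrite andbT; apply/negP; case/hasP=> AB /mapP[[A B] /splits_mem[h1 _ _ _] ->] /=.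
case: p => // p /mapP[[C D] _ [eA _]].
by move: h1; rewrite eA => /mem_subseq /(_ y); rewrite inE eqxx (negbTE yS) => /(_ isT).
Qed.

Lemma size_splits S p : size (splits S p) = 'C(size S, p).
Proof.
elim: S p => [|y S IH] [|p] //=.
  by rewrite size_map IH !bin0.
by rewrite size_cat !size_map !IH binS addnC.
Qed.

Lemma splits1_mem S p AB : AB \in splits1 S p ->
  [/\ subseq AB.1 S, subseq AB.2 S & perm_eq (AB.1 ++ AB.2) S].
Proof.
case: S => [|y S]; first by case/splits_mem.
case/mapP=> [[A B] /splits_mem[h1 h2 h3 h4] ->] /=.
rewrite eqxx h1 perm_cons h3; split=> //.
exact: subseq_trans h2 (subseq_cons _ _).
Qed.

Lemma splits1_uniq S p : uniq S -> uniq (splits1 S p).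
Proof.
case: S => [|y S]; first by move=> _; apply: splits_uniq.
case/andP=> _ uS; rewrite map_inj_uniq ?splits_uniq //.
by move=> [A B] [C D] /= [-> ->].
Qed.


Definition spl a b S := if isob a b then splits1 S (internals a) else splits S (internals a).

Fixpoint renum (t : tree) (S : seq nat) : seq rtree :=
  match t with
  | Leaf => if S is [::] then [:: RLeaf] else [::]
  | Node a b => if S is x :: S' then
       flatten (map (fun AB => flatten (map (fun c => map (fun d => RNode x c d) (renum b AB.2))
                                          (renum a AB.1))) (spl a b S'))
     else [::]
  end.

Lemma spl_mem a b S AB : AB \in spl a b S ->
  [/\ subseq AB.1 S, subseq AB.2 S & perm_eq (AB.1 ++ AB.2) S].
Proof. by rewrite /spl; case: isob => [/splits1_mem|/splits_mem[]]. Qed.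

Lemma spl_uniq a b S : uniq S -> uniq (spl a b S).
Proof. by rewrite /spl; case: isob => [/splits1_uniq|/splits_uniq]. Qed.

Lemma enum_nodeP a b x S r : r \in renum (Node a b) (x :: S) <->
  exists AB c d, [/\ AB \in spl a b S, c \in renum a AB.1, d \in renum b AB.2 & r = RNode x c d].
Proof.
split.
  case/flatten_mapP=> AB hAB /flatten_mapP[c hc /mapP[d hd ->]].
  by exists AB, c, d.
case=> AB [c [d [hAB hc hd ->]]].
apply/flatten_mapP; exists AB => //; apply/flatten_mapP; exists c => //.
exact: map_f.
Qed.

Lemma enum_nil t r : r \in renum t [::] -> r = RLeaf.
Proof. by case: t => [|a b] //=; rewrite inE => /eqP. Qed.

Lemma enum_sound t S r : sorted ltn S -> r \in renum t S ->
  [/\ perm_eq (rlabels r) S, heap r & isob (forget r) t].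
Proof.
elim: t S r => [|a IHa b IHb] S r.
  by case: S => //= _; rewrite inE => /eqP ->.
case: S => [|x S] //= sS /enum_nodeP[[A B] [c [d [hAB hc hd ->]]]] /=.
have sS' : sorted ltn S := path_sorted sS.
case/spl_mem: hAB => /= sA sB pAB.
have [pc hpc ic] := IHa _ _ (subseq_sorted ltn_trans sA sS') hc.
have [pd hpd id] := IHb _ _ (subseq_sorted ltn_trans sB sS') hd.
have pcd : perm_eq (rlabels c ++ rlabels d) S := perm_trans (perm_cat pc pd) pAB.
rewrite perm_cons pcd hpc hpd ic id (perm_all _ pcd) /=.
by rewrite (order_path_min ltn_trans sS).
Qed.


Lemma has_risob_trans r r' L : risob r r' -> has (risob r') L -> has (risob r) L.
Proof.
move=> h /hasP[s hs h']; apply/hasP; exists s => //; exact: risob_trans h h'.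
Qed.

Lemma risob_swap x c d : risob (RNode x c d) (RNode x d c).
Proof. by rewrite /= eqxx !risob_refl orbT. Qed.

Lemma enum_complete t S r : sorted ltn S -> heap r -> perm_eq (rlabels r) S ->
  isob (forget r) t -> has (risob r) (renum t S).
Proof.
elim: t S r => [|a IHa b IHb] S r.
  case: r => [|k c d] //= _ _ /perm_size; case: S => //= _ _.
case: r => [|k c d] //= sS /andP[/andP[hk hc] hd].
case: S sS => [|x S] sS pr; first by move: (perm_size pr).
have sS' : sorted ltn S := path_sorted sS.
have uS : uniq S := sorted_uniq ltn_trans ltnn sS'.
have xS : all (ltn x) S := order_path_min ltn_trans sS.
have xk : k = x.
  have := perm_mem pr k; rewrite !inE eqxx /= => /esym.
  case/orP=> [/eqP //|kS].
  have := perm_mem pr x; rewrite !inE eqxx /=.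
  case/orP=> [/eqP -> //|xcd].
  have l1 := allP xS _ kS; have l2 := allP hk _ xcd.
  by have := ltn_trans l1 l2; rewrite ltnn.
subst k; rewrite perm_cons in pr.
have claim : forall c d, heap c -> heap d -> perm_eq (rlabels c ++ rlabels d) S ->
   isob (forget c) a -> isob (forget d) b ->
   (isob a b -> S = [::] \/ head 0 S \in rlabels c) ->
   has (risob (RNode x c d)) (renum (Node a b) (x :: S)).
  move=> u v hu hv pr0 ic id hh.
  pose P := fun z => z \in rlabels u.
  have ucd : uniq (rlabels u ++ rlabels v) by rewrite (perm_uniq pr0).
  move: (ucd); rewrite cat_uniq => /and3P[uc dis ud].
  have inS z : z \in rlabels u ++ rlabels v = (z \in S) by rewrite (perm_mem pr0).
  have pcA : perm_eq (rlabels u) (filter P S).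
    apply: uniq_perm => //; first exact: filter_uniq.
    move=> z; rewrite mem_filter /P -inS mem_cat.
    by case: (z \in rlabels u).
  have pdB : perm_eq (rlabels v) (filter (predC P) S).
    apply: uniq_perm => //; first exact: filter_uniq.
    move=> z; rewrite mem_filter /P /= -inS mem_cat.
    case zc: (z \in rlabels u) => /=; last by [].
    apply/negP => zd; move/negP: dis; apply; apply/hasP; by exists z.
  have /hasP[c' hc' rc] := IHa _ _ (sorted_filter ltn_trans _ sS') hu pcA ic.
  have /hasP[d' hd' rd] := IHb _ _ (sorted_filter ltn_trans _ sS') hv pdB id.
  have cnt : count P S = internals a.
    by rewrite -size_filter -(perm_size pcA) size_rlabels (isob_internals ic).
  have hAB : (filter P S, filter (predC P) S) \in spl a b S.
    rewrite /spl; case iab: (isob a b); last by rewrite -cnt splits_filter.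
    move: hh (cnt); move: (S) => S1; case: S1 => [|y S1] hh cnt1.
      by rewrite -cnt1; exact: (splits_filter P [::]).
    case: (hh iab) => [/eqP //|/= Py].
    have Py2 : P y := Py; rewrite Py2 /= -cnt1 /= Py2 add1n /=.
    exact: (map_f (fun AB => (y :: AB.1, AB.2)) (splits_filter P S1)).
  apply/hasP; exists (RNode x c' d').
    by apply/enum_nodeP; exists (filter P S, filter (predC P) S), c', d'.
  by rewrite /= eqxx rc rd.
have case1 : forall c d, heap c -> heap d -> perm_eq (rlabels c ++ rlabels d) S ->
   isob (forget c) a -> isob (forget d) b ->
   has (risob (RNode x c d)) (renum (Node a b) (x :: S)).
  move=> u v hu hv pr0 ic id.
  case iab: (isob a b); last by apply: claim => //; rewrite iab.
  have [eS|[y [S0 eS]]] : S = [::] \/ exists y S0, S = y :: S0.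
    by case: (S) => [|y S0]; [left|right; exists y, S0].
    by apply: claim => // _; left.
  case yc: (y \in rlabels u); first by apply: claim => // _; right; rewrite eS.
  apply: (has_risob_trans (risob_swap x u v)).
  apply: claim => //.
  - by rewrite perm_catC.
  - by apply: isob_trans id _; rewrite isob_sym.
  - by apply: isob_trans ic _.
  - move=> _; right; rewrite eS /=.
    by have := perm_mem pr0 y; rewrite eS mem_cat yc inE eqxx /= => ->.
case/orP=> /andP[ic id]; first exact: case1.
apply: (has_risob_trans (risob_swap x c d)).
apply: case1 => //; by rewrite perm_catC.
Qed.


Lemma pairwise_flatten_map (T U : Type) (R : rel U) (f : T -> seq U) s :
  all (fun x => pairwise R (f x)) s ->
  pairwise (fun x y => allrel R (f x) (f y)) s -> pairwise R (flatten (map f s)).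
Proof.
elim: s => [|x s IH] //= /andP[px ps] /andP[ax pxs].
rewrite pairwise_cat px IH // andbT.
elim: s {IH ps pxs} ax => [|y s IH] /=; first by rewrite allrel0r.
by case/andP=> h1 h2; rewrite allrel_catr h1 IH.
Qed.

Lemma no_cross a b S AB AB' c d :
  sorted ltn S -> AB \in spl a b S -> AB' \in spl a b S ->
  c \in renum a AB.1 -> d \in renum b AB'.2 -> risob c d ->
  [/\ c = RLeaf, d = RLeaf, AB.1 = [::] & AB'.2 = [::]].
Proof.
move=> sS hAB hAB' hc hd rcd.
have [sub1 sub2 _] := spl_mem hAB; have [sub1' sub2' _] := spl_mem hAB'.
have [pc _ ic] := enum_sound (subseq_sorted ltn_trans sub1 sS) hc.
have [pd _ id] := enum_sound (subseq_sorted ltn_trans sub2' sS) hd.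
have iab : isob a b.
  apply: isob_trans id; apply: isob_trans (risob_forget rcd).
  by rewrite isob_sym.
move: hAB hAB'; rewrite /spl iab.
case: S sS {sub1 sub2 sub1' sub2'} => [|y S] sS.
  move=> /splits_mem[s1 _ _ _] /splits_mem[_ s2 _ _].
  move: s1 s2; rewrite !subseq0 => /eqP e1 /eqP e2.
  move: hc hd; rewrite e1 e2 => /enum_nil -> /enum_nil ->; done.
move=> /mapP[[A B] _ eAB] /mapP[[A' B'] /splits_mem[_ sB' _ _] eAB'].
have yc : y \in rlabels c by rewrite (perm_mem pc) eAB inE eqxx.
have : y \in rlabels d by rewrite -(perm_mem (risob_perm rcd)).
rewrite (perm_mem pd) eAB' /= => /(mem_subseq sB').
have := sorted_uniq ltn_trans ltnn sS; rewrite /= => /andP[/negP yS _].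
by move/yS.
Qed.

Lemma sub_eq_perm S A A' : sorted ltn S -> subseq A S -> subseq A' S ->
  perm_eq A A' -> A = A'.
Proof.
move=> sS s1 s2 p; apply: (@irr_sorted_eq _ ltn ltn_trans ltnn).
- exact: (subseq_sorted ltn_trans s1 sS).
- exact: (subseq_sorted ltn_trans s2 sS).
- exact: perm_mem.
Qed.

Lemma enum_pairwise t S : sorted ltn S ->
  pairwise (fun r1 r2 => ~~ risob r1 r2) (renum t S).
Proof.
elim: t S => [|a IHa b IHb] S; first by case: S => //=.
case: S => [|x S] //= sS.
have sS' : sorted ltn S := path_sorted sS.
apply: pairwise_flatten_map.
  apply/allP => -[A B] hAB /=.
  have [sA sB _] := spl_mem hAB.
  have pa := IHa _ (subseq_sorted ltn_trans sA sS').
  have pb := IHb _ (subseq_sorted ltn_trans sB sS').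
  apply: pairwise_flatten_map.
    apply/allP => c hc; rewrite pairwise_map.
    apply: (sub_in_pairwise (P := [pred d | d \in renum b B])) pb; last first.
      by apply/allP.
    move=> d d' hd hd' /= nd; rewrite eqxx risob_refl /= (negbTE nd) /=.
    apply/negP => /andP[r1 r2].
    have [ec ed' _ _] := no_cross sS' hAB hAB hc hd' r1.
    rewrite risob_sym in r2.
    have [_ ed _ _] := no_cross sS' hAB hAB hc hd r2.
    by move: nd; rewrite ed ed'.
  apply: (sub_in_pairwise (P := [pred c | c \in renum a A])) pa; last first.
    by apply/allP.
  move=> c c' hc hc' /= nc; apply/allrelP => r r' /mapP[d hd ->] /mapP[d' hd' ->] /=.
  rewrite eqxx (negbTE nc) /=; apply/negP => /andP[r1 r2].
  have [ec _ _ _] := no_cross sS' hAB hAB hc hd' r1.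
  rewrite risob_sym in r2.
  have [ec' _ _ _] := no_cross sS' hAB hAB hc' hd r2.
  by move: nc; rewrite ec ec'.
have := spl_uniq a b (sorted_uniq ltn_trans ltnn sS'); rewrite uniq_pairwise.
apply: (sub_in_pairwise (P := [pred AB | AB \in spl a b S])); last by apply/allP.
move=> [A B] [A' B'] hAB hAB' /= nAB.
apply/allrelP => r r' /flatten_mapP[c hc /mapP[d hd ->]] /flatten_mapP[c' hc' /mapP[d' hd' ->]] /=.
rewrite eqxx /=; apply/negP; case/orP => /andP[r1 r2].
  have [sA sB _] := spl_mem hAB; have [sA' sB' _] := spl_mem hAB'.
  have [pc _ _] := enum_sound (subseq_sorted ltn_trans sA sS') hc.
  have [pc' _ _] := enum_sound (subseq_sorted ltn_trans sA' sS') hc'.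
  have [pd _ _] := enum_sound (subseq_sorted ltn_trans sB sS') hd.
  have [pd' _ _] := enum_sound (subseq_sorted ltn_trans sB' sS') hd'.
  have eA : A = A'.
    apply: (sub_eq_perm sS' sA sA'); apply: perm_trans (perm_trans (risob_perm r1) pc').
    by rewrite perm_sym.
  have eB : B = B'.
    apply: (sub_eq_perm sS' sB sB'); apply: perm_trans (perm_trans (risob_perm r2) pd').
    by rewrite perm_sym.
  by move: nAB; rewrite eA eB eqxx.
have [_ _ e1 e2] := no_cross sS' hAB hAB' hc hd' r1.
rewrite risob_sym in r2.
have [_ _ e3 e4] := no_cross sS' hAB' hAB hc' hd r2.
by move: nAB; rewrite /= in e1 e2 e3 e4; rewrite e1 e2 e3 e4 eqxx.
Qed.


Fixpoint g t := match t with
  | Leaf => 1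
  | Node a b => (if isob a b then 'C((internals a + internals b).-1, (internals a).-1)
                 else 'C(internals a + internals b, internals a)) * g a * g b
  end.

Lemma size_flatten_map (T U : Type) (f : T -> seq U) s :
  size (flatten (map f s)) = sumn (map (fun x => size (f x)) s).
Proof. by elim: s => //= x s <-; rewrite size_cat. Qed.

Lemma sumn_const_in (T : eqType) (f : T -> nat) k s :
  {in s, forall x, f x = k} -> sumn (map f s) = size s * k.
Proof.
elim: s => //= x s IH h; rewrite h ?mem_head // IH // => y ys.
by apply: h; rewrite inE ys orbT.
Qed.

Lemma spl_size a b S AB : AB \in spl a b S -> size S = internals a + internals b ->
  size AB.1 = internals a /\ size AB.2 = internals b.
Proof.
move=> hAB hS.
have [_ _ /perm_size] := spl_mem hAB; rewrite size_cat hS => e.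
suff e1 : size AB.1 = internals a by split=> //; move: e; rewrite e1 => /addnI.
move: hAB; rewrite /spl; case iab: (isob a b); last by case/splits_mem.
case: S hS => [|y S] hS; first by case/splits_mem.
case/mapP=> -[A B] /splits_mem[_ _ _ sA] -> /=; rewrite sA prednK //.
move: hS; rewrite -(isob_internals iab) /=; case: (internals a) => //.
Qed.

Lemma size_spl a b S : size S = internals a + internals b ->
  size (spl a b S) = if isob a b then 'C((internals a + internals b).-1, (internals a).-1)
                 else 'C(internals a + internals b, internals a).
Proof.
move=> hS; rewrite /spl; case iab: (isob a b); last by rewrite size_splits hS.
case: S hS => [|y S] hS.
  by rewrite /splits1 size_splits -hS; move: hS => /= /esym /eqP; rewrite addn_eq0 => /andP[/eqP -> _].
by rewrite /= size_map size_splits -hS.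
Qed.

Lemma size_allpairs (T U : Type) (f : T -> U -> rtree) La Lb :
  size (flatten (map (fun c => map (f c) Lb) La)) = size La * size Lb.
Proof. by elim: La => //= c La IH; rewrite size_cat size_map IH. Qed.

Lemma size_enum t S : size (renum t S) = if size S == internals t then g t else 0.
Proof.
elim: t S => [|a IHa b IHb] [|x S] //=.
rewrite size_flatten_map eqSS.
under eq_map => AB do rewrite size_allpairs IHa IHb.
case: eqP => hS.
  rewrite (sumn_const_in (k := g a * g b)) ?size_spl // ?mulnA // => AB hAB.
  by have [-> ->] := spl_size hAB hS; rewrite !eqxx.
rewrite (sumn_const_in (k := 0)) ?muln0 // => AB hAB.
have [_ _ /perm_size] := spl_mem hAB; rewrite size_cat => e.
case: eqP => e1; case: eqP => e2 //; try by rewrite ?muln0.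
by case: hS; rewrite -e -e1 -e2.
Qed.


Lemma internals0 t : internals t = 0 -> t = Leaf.
Proof. by case: t. Qed.

Lemma bin_double m : 2 * 'C(m + m.+1, m) = 'C((m + m.+1).+1, m.+1).
Proof.
by rewrite binS -(bin_sub (leq_addl m m.+1)) addnK mul2n -addnn.
Qed.

Lemma g_identity t : g t * hook_prod t * 2 ^ sym_nodes t = (internals t)`! * 2 ^ cherries t.
Proof.
elim: t => [|a IHa b IHb] //=.
case iab: (isob a b).
  have pq : internals b = internals a by rewrite (isob_internals iab).
  case ep: (internals a) => [|m].
    have ea : a = Leaf by apply: internals0.
    have eb : b = Leaf by apply: internals0; rewrite pq.
    by subst a b.
  have la : is_leaf a = false by case: (a) ep => //.
  rewrite la /= !expnD /=.
  transitivity ((2 * 'C((internals a + internals b).-1, (internals a).-1)) * (g a * hook_prod a * 2 ^ sym_nodes a)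
                 * (g b * hook_prod b * 2 ^ sym_nodes b) * (internals a + internals b).+1).
    rewrite ep; ring.
  rewrite IHa IHb pq ep /= bin_double -addSn (factS (m.+1 + m.+1)).
  rewrite -(bin_fact (n := (m.+1 + m.+1)) (m := m.+1)) ?leq_addr // addKn.
  ring.
have la : is_leaf a && is_leaf b = false.
  by move: iab; case: (a) => //; case: (b).
rewrite la /= !expnD /=.
transitivity ('C(internals a + internals b, internals a) * (g a * hook_prod a * 2 ^ sym_nodes a)
                 * (g b * hook_prod b * 2 ^ sym_nodes b) * (internals a + internals b).+1).
  ring.
rewrite IHa IHb (factS (internals a + internals b)).
rewrite -(bin_fact (n := internals a + internals b) (m := internals a)) ?leq_addr // addKn.
ring.
Qed.

Unset Implicit Arguments.
Import GRing.Theory Num.Theory.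
Local Open Scope ring_scope.

Theorem lemma2p4 (n : nat) (t : tree) :
  (2 <= n)%N -> leaves t = n ->
  exists L : seq rtree,
    [/\ all (fun r => is_ranking r && isob (forget r) t) L,
        (forall r : rtree, is_ranking r -> isob (forget r) t -> has (risob r) L),
        pairwise (fun r1 r2 => ~~ risob r1 r2) L &
        (size L)%:R = ((n.-1)`!)%:R / (hook_prod t)%:R
                      * (2 : rat) ^ ((cherries t)%:Z - (sym_nodes t)%:Z)].
Proof.
move=> n2 ln.
have hN : n.-1 = internals t by rewrite -ln leaves_internals.
have sI : sorted ltn (iota 1 n.-1) := iota_ltn_sorted 1 _.
exists (renum t (iota 1 n.-1)); split.
- apply/allP => r hr; have [pr hh ir] := enum_sound sI hr.
  rewrite ir andbT /is_ranking hh andbT (perm_size pr) size_iota pr /=.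
  case: t ln hN hr {ir} => [/= ln|a b _ hN]; first by move: n2; rewrite -ln.
  case: n.-1 hN => // k _ /= /enum_nodeP [AB [c [d [_ _ _ ->]]]] //.
- move=> r /and3P[pr _ hh] ir; apply: enum_complete => //.
  by move: pr; rewrite size_rlabels (isob_internals ir) -hN.
- exact: enum_pairwise.
rewrite size_enum size_iota hN eqxx -hN.
have H : ((g t)%:R : rat) * ((hook_prod t)%:R * 2 ^+ sym_nodes t)
         = ((n.-1)`!)%:R * 2 ^+ cherries t.
  by rewrite mulrA -natrM -[2]/(2%:R) -!natrX -!natrM g_identity hN.
have h0 : ((hook_prod t)%:R : rat) != 0.
  rewrite pnatr_eq0 -lt0n; elim: (t) => //= a IHa b IHb.
  by rewrite !muln_gt0 IHa IHb.
have s0 : (2 : rat) ^+ sym_nodes t != 0 by rewrite expf_neq0.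
rewrite -[X in X = _](mulfK (mulf_neq0 h0 s0)) H.
rewrite expfzDr // -invr_expz -!exprnP.
field; by rewrite h0 s0.
Qed.
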